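(* The following are equivalent for an integral domain $D$: (1) $D$ is a $\ast$-SH domain; (2) $D$ is of finite $\ast$-character and for every pair $P,Q$ of distinct maximal $\ast$-ideals of $D$, $P\cap Q$ contains no nonzero prime ideal.
   Context: $\ast$ is a star operation on $D$ of finite character. A $\ast$-ideal is a nonzero fractional ideal $I$ with $I^\ast=I$; it is of finite type if $I=J^\ast$ for some nonzero finitely generated $J$. A maximal $\ast$-ideal is an integral $\ast$-ideal maximal among proper integral $\ast$-ideals. $D$ is of finite $\ast$-character if every nonzero nonunit of $D$ lies in at most finitely many maximal $\ast$-ideals. A $\ast$-homog ideal is an integral $\ast$-ideal $I$ of finite type with $I\subsetneq D$ such that $(J+L)^{\ast}\neq D$ for every pair $J,L$ of proper integral $\ast$-ideals of finite type containing $I$. $D$ is a $\ast$-SH domain if for every nonzero nonunit $x\in D$, $xD=(I_1\cdots I_n)^\ast$ for some finitely many $\ast$-homog ideals $I_1,\dots,I_n$. *)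

(* Defs.v *)
From Stdlib Require List.
From HB Require Import structures.
From mathcomp Require Import all_boot all_order all_algebra.
Set Implicit Arguments. Unset Strict Implicit. Unset Printing Implicit Defensive.
Import Order.TTheory GRing.Theory Num.Theory.
Local Open Scope ring_scope.

Section StarDefs.
Variable D : idomainType.
Notation K := {fraction D}.
Definition emb (d : D) : K := @FracField.tofrac D d.

Definition kset := K -> Prop.
Definition subk (I J : kset) : Prop := forall x, I x -> J x.

Definition Dset : kset := fun x => exists d : D, x = emb d.

Definition submodule (I : kset) : Prop :=
  I 0 /\ (forall x y, I x -> I y -> I (x + y)) /\
  (forall (d : D) x, I x -> I (emb d * x)).

Definition fractional (I : kset) : Prop :=
  submodule I /\ (exists x, x != 0 /\ I x) /\
  (exists d : D, d != 0 /\ forall x, I x -> Dset (emb d * x)).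

Definition integral (I : kset) : Prop := fractional I /\ subk I Dset.

Definition principal (x : K) : kset := fun y => exists d : D, y = x * emb d.

Definition smul (x : K) (I : kset) : kset := fun y => exists z, I z /\ y = x * z.

Definition isum (I J : kset) : kset :=
  fun y => exists a b, I a /\ J b /\ y = a + b.

Definition imul (I J : kset) : kset :=
  fun y => exists (n : nat) (a b : 'I_n -> K),
    (forall i, I (a i)) /\ (forall i, J (b i)) /\ y = \sum_(i < n) a i * b i.

Definition iprod (l : list kset) : kset := foldr imul Dset l.

Definition fin_gen (I : kset) : Prop :=
  exists s : seq K, I = fun y => exists c : 'I_(size s) -> D,
    y = \sum_(i < size s) emb (c i) * s`_i.

Definition star_operation (star : kset -> kset) : Prop :=
  (forall I, fractional I -> fractional (star I)) /\
  (forall x, x != 0 -> star (principal x) = principal x) /\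
  (forall x I, x != 0 -> fractional I -> star (smul x I) = smul x (star I)) /\
  (forall I, fractional I -> subk I (star I)) /\
  (forall I J, fractional I -> fractional J -> subk I J -> subk (star I) (star J)) /\
  (forall I, fractional I -> star (star I) = star I).

Definition finite_character (star : kset -> kset) : Prop :=
  forall I, fractional I ->
    star I = fun y => exists J, fractional J /\ fin_gen J /\ subk J I /\ star J y.

Definition star_ideal (star : kset -> kset) (I : kset) : Prop :=
  fractional I /\ star I = I.

Definition finite_type (star : kset -> kset) (I : kset) : Prop :=
  star_ideal star I /\ exists J, fractional J /\ fin_gen J /\ I = star J.

Definition int_star_ideal (star : kset -> kset) (I : kset) : Prop :=
  star_ideal star I /\ subk I Dset.

Definition proper (I : kset) : Prop := I <> Dset.

Definition max_star_ideal (star : kset -> kset) (P : kset) : Prop :=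
  int_star_ideal star P /\ proper P /\
  forall J, int_star_ideal star J -> proper J -> subk P J -> J = P.

Definition finite_star_character (star : kset -> kset) : Prop :=
  forall x : D, x != 0 -> x \isn't a GRing.unit ->
    exists l : list kset, forall P, max_star_ideal star P -> P (emb x) -> List.In P l.

Definition star_homog (star : kset -> kset) (I : kset) : Prop :=
  int_star_ideal star I /\ finite_type star I /\ proper I /\
  forall J L, int_star_ideal star J -> finite_type star J -> proper J -> subk I J ->
              int_star_ideal star L -> finite_type star L -> proper L -> subk I L ->
              star (isum J L) <> Dset.

Definition star_SH (star : kset -> kset) : Prop :=
  forall x : D, x != 0 -> x \isn't a GRing.unit ->
    exists l : list kset, (forall I, List.In I l -> star_homog star I) /\
      principal (emb x) = star (iprod l).

Definition nz_prime (P : kset) : Prop :=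
  integral P /\ proper P /\
  forall a b : D, P (emb (a * b)) -> P (emb a) \/ P (emb b).

End StarDefs.

(* Main.v *)
Require Import Defs.
From HB Require Import structures.
From mathcomp Require Import all_boot all_order all_algebra.
From Stdlib Require Import FunctionalExtensionality PropExtensionality Classical ClassicalEpsilon.
From Stdlib Require List.
From mathcomp Require classical_sets.
From mathcomp Require Import ring.
Set Implicit Arguments. Unset Strict Implicit. Unset Printing Implicit Defensive.
Import Order.TTheory GRing.Theory Num.Theory.
Local Open Scope ring_scope.

Definition chainP (T : Type) (C : (T -> Prop) -> Prop) :=
  forall A B, C A -> C B -> (forall x, A x -> B x) \/ (forall x, B x -> A x).
Definition bigU (T : Type) (C : (T -> Prop) -> Prop) : T -> Prop :=
  fun y => exists A, C A /\ A y.

Lemma setext (T : Type) (A B : T -> Prop) : (forall x, A x <-> B x) -> A = B.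
Proof.
move=> H; apply: functional_extensionality => x; apply: propositional_extensionality; exact: H.
Qed.

Lemma zorn_k (T : Type) (F : (T -> Prop) -> Prop) (A0 : T -> Prop) :
  F A0 ->
  (forall C, (forall A, C A -> F A) -> (exists A, C A) -> chainP C -> F (bigU C)) ->
  exists M, F M /\ forall B, F B -> (forall x, M x -> B x) -> B = M.
Proof.
move=> FA0 Hch.
pose P' := fun A : T -> Prop => F A \/ A = (fun _ => False).
have [A [PA Amax]] : exists A, P' A /\ forall B, classical_sets.proper A B -> ~ P' B.
  apply: classical_sets.Zorn_bigcup => G GP Gtot.
  case: (classic (exists A, G A /\ F A)) => [[A1 [GA1 FA1]]|nF].
  - left.
    have -> : classical_sets.bigcup G (fun X => X) = bigU (fun A => G A /\ F A).
      apply: setext => y; split.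
        case=> X GX Xy; exists X; split => //; split => //.
        case: (GP X GX) => // Xe; by rewrite Xe in Xy.
      by case=> X [[GX _] Xy]; exists X.
    apply: Hch; first by move=> A [].
      by exists A1.
    move=> X Y [GX _] [GY _]; exact: (Gtot X Y GX GY).
  - right; apply: setext => y; split => //.
    case=> X GX Xy; case: (GP X GX) => FX.
      by apply: nF; exists X.
    by rewrite FX in Xy.
have key : forall B, P' B -> (forall x, A x -> B x) -> B = A.
  move=> B PB AB; case: (classic (forall x, B x -> A x)) => BA.
    by apply: setext => x; split; [apply: BA|apply: AB].
  by exfalso; apply: (Amax B) => //; split.
have FA : F A.
  case: PA => // Ae; rewrite -(key A0); first by [].
    by left.
  by rewrite Ae.
exists A; split => // B FB AB; apply: key => //; by left.
Qed.
Section Main.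
Variable D : idomainType.
Local Notation K := {fraction D}.
Local Notation kset := (kset D).
Local Notation emb := (@emb D).
Local Notation Dset := (@Dset D).

Lemma embD a b : emb (a + b) = emb a + emb b. Proof. by rewrite /emb tofracD. Qed.
Lemma embM a b : emb (a * b) = emb a * emb b. Proof. by rewrite /emb tofracM. Qed.
Lemma embN a : emb (- a) = - emb a. Proof. by rewrite /emb tofracN. Qed.
Lemma emb0 : emb 0 = 0. Proof. by rewrite /emb tofrac0. Qed.
Lemma emb1 : emb 1 = 1. Proof. by rewrite /emb tofrac1. Qed.
Lemma emb_inj a b : emb a = emb b -> a = b.
Proof. by move=> H; apply/eqP; rewrite -tofrac_eq; apply/eqP. Qed.
Lemma emb_neq0 a : a != 0 -> emb a != 0.
Proof. by rewrite /emb tofrac_eq0. Qed.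
Lemma emb_prod (T : Type) (l : seq T) (f : T -> D) :
  emb (\prod_(i <- l) f i) = \prod_(i <- l) emb (f i).
Proof. by rewrite /emb rmorph_prod. Qed.

Lemma Dset_emb d : Dset (emb d). Proof. by exists d. Qed.
Lemma DsetD x y : Dset x -> Dset y -> Dset (x + y).
Proof. by move=> [a ->] [b ->]; exists (a + b); rewrite embD. Qed.
Lemma DsetM x y : Dset x -> Dset y -> Dset (x * y).
Proof. by move=> [a ->] [b ->]; exists (a * b); rewrite embM. Qed.
Lemma Dset0 : Dset 0. Proof. by exists 0; rewrite emb0. Qed.
Lemma Dset1 : Dset 1. Proof. by exists 1; rewrite emb1. Qed.

Lemma Dset_principal1 : Dset = principal 1.
Proof. by apply: setext => y; split; case=> d ->; exists d; rewrite ?mul1r. Qed.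

Section Submod.
Variable I : kset.
Hypothesis sI : submodule I.
Lemma sub0 : I 0. Proof. by case: sI. Qed.
Lemma subD x y : I x -> I y -> I (x + y). Proof. by case: sI => _ [H _]; apply: H. Qed.
Lemma subM d x : I x -> I (emb d * x). Proof. by case: sI => _ [_ H]; apply: H. Qed.
Lemma subN x : I x -> I (- x).
Proof. by move=> Ix; rewrite -mulN1r -emb1 -embN; apply: subM. Qed.
Lemma subB x y : I x -> I y -> I (x - y).
Proof. by move=> Ix Iy; apply: subD => //; apply: subN. Qed.
Lemma sub_sum (T : Type) (r : seq T) (f : T -> K) :
  (forall i, I (f i)) -> I (\sum_(i <- r) f i).
Proof.
move=> H; elim: r => [|a r IH]; first by rewrite big_nil; apply: sub0.
by rewrite big_cons; apply: subD.
Qed.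
End Submod.

Definition ideal (I : kset) := submodule I /\ subk I Dset.

Lemma ideal_mul (I : kset) a b : ideal I -> I (emb a) -> I (emb (a * b)).
Proof. by move=> [sI _] Ia; rewrite mulrC embM; apply: subM. Qed.
Lemma ideal_mulK (I : kset) a y : ideal I -> I y -> I (y * emb a).
Proof. by move=> [sI _] Ia; rewrite mulrC; apply: subM. Qed.
Lemma ideal_mulD (I : kset) y z : ideal I -> I y -> Dset z -> I (y * z).
Proof. by move=> iI Iy [d ->]; apply: ideal_mulK. Qed.

Lemma ideal_one (I : kset) : ideal I -> I 1 -> I = Dset.
Proof.
move=> [sI IsD] I1; apply: setext => y; split; first exact: IsD.
by case=> d ->; rewrite -[emb d]mulr1; apply: subM.
Qed.

Lemma Dset_sub : submodule Dset.
Proof.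
split; first exact: Dset0. split; first exact: DsetD.
by move=> d x Dx; apply: DsetM => //; apply: Dset_emb.
Qed.
Lemma Dset_ideal : ideal Dset. Proof. by split; [apply: Dset_sub|]. Qed.

Lemma fractional_Dset : fractional Dset.
Proof.
split; first exact: Dset_sub. split.
  by exists 1; split; [apply: oner_neq0|apply: Dset1].
by exists 1; split; [apply: oner_neq0|move=> x Dx; rewrite emb1 mul1r].
Qed.

Lemma ideal_integral (I : kset) : ideal I -> (exists x, x != 0 /\ I x) -> integral I.
Proof.
move=> [sI IsD] nz; split => //; split => //; split => //.
by exists 1; split; [apply: oner_neq0|move=> x Ix; rewrite emb1 mul1r; apply: IsD].
Qed.
Lemma integral_ideal (I : kset) : integral I -> ideal I.
Proof. by move=> [[sI _] IsD]. Qed.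

End Main.
Section Frac.
Variable D : idomainType.
Local Notation K := {fraction D}.
Local Notation kset := (kset D).
Local Notation emb := (@emb D).
Local Notation Dset := (@Dset D).

Lemma split_l m n (i : 'I_m) : split (lshift n i) = inl i.
Proof. exact: (unsplitK (inl _ i)). Qed.
Lemma split_r m n (i : 'I_n) : split (rshift m i) = inr i.
Proof. exact: (unsplitK (inr _ i)). Qed.

Lemma smul_frac (x : K) (I : kset) :
  x != 0 -> (exists m : D, m != 0 /\ Dset (emb m * x)) -> fractional I ->
  fractional (smul x I).
Proof.
move=> x0 [m [m0 Dm]] [sI [[y [y0 Iy]] [d [d0 Hd]]]].
split; [split; [|split]|split].
- by exists 0; split; [apply: sub0|rewrite mulr0].
- by move=> _ _ [z1 [I1 ->]] [z2 [I2 ->]]; exists (z1 + z2); split; [apply: subD|rewrite mulrDr].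
- by move=> e _ [z [Iz ->]]; exists (emb e * z); split; [apply: subM|rewrite mulrCA].
- by exists (x * y); split; [rewrite mulf_neq0|exists y].
- exists (m * d); split; first by rewrite mulf_neq0.
  move=> _ [z [Iz ->]]; rewrite embM mulrACA; apply: DsetM => //; exact: Hd.
Qed.

Lemma principal_smul (x : K) : principal x = smul x Dset.
Proof.
apply: setext => y; split; first by case=> d ->; exists (emb d); split => //; exists d.
by case=> z [[d ->] ->]; exists d.
Qed.

Lemma principal_frac (b : D) : b != 0 -> fractional (principal (emb b)).
Proof.
move=> b0; rewrite principal_smul; apply: smul_frac; first exact: emb_neq0.
  by exists 1; split; [apply: oner_neq0|rewrite emb1 mul1r; apply: Dset_emb].
exact: fractional_Dset.
Qed.

Lemma isum_sub (I J : kset) : submodule I -> submodule J -> submodule (isum I J).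
Proof.
move=> sI sJ; split; [|split].
- by exists 0, 0; split; [apply: sub0|split; [apply: sub0|rewrite addr0]].
- move=> _ _ [a [b [Ia [Jb ->]]]] [a' [b' [Ia' [Jb' ->]]]].
  exists (a + a'), (b + b'); split; first exact: subD.
  by split; [apply: subD|rewrite addrACA].
- move=> d _ [a [b [Ia [Jb ->]]]]; exists (emb d * a), (emb d * b).
  by split; [apply: subM|split; [apply: subM|rewrite mulrDr]].
Qed.

Lemma isum_frac (I J : kset) : fractional I -> fractional J -> fractional (isum I J).
Proof.
move=> [sI [[y [y0 Iy]] [d [d0 Hd]]]] [sJ [_ [e [e0 He]]]].
split; first exact: isum_sub. split.
  by exists y; split => //; exists y, 0; split => //; split; [apply: sub0|rewrite addr0].
exists (d * e); split; first by rewrite mulf_neq0.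
move=> _ [a [b [Ia [Jb ->]]]]; rewrite mulrDr embM; apply: DsetD.
  by rewrite mulrAC; apply: DsetM; [apply: Hd|apply: Dset_emb].
by rewrite -mulrA; apply: DsetM; [apply: Dset_emb|apply: He].
Qed.

Lemma isum_ideal (I J : kset) : ideal I -> ideal J -> ideal (isum I J).
Proof.
move=> [sI I1] [sJ J1]; split; first exact: isum_sub.
by move=> _ [a [b [Ia [Jb ->]]]]; apply: DsetD; [apply: I1|apply: J1].
Qed.

Lemma imul_sub (A B C : kset) : submodule C -> (forall a b, A a -> B b -> C (a * b)) ->
  subk (imul A B) C.
Proof.
move=> sC H _ [n [a [b [Ha [Hb ->]]]]]; apply: sub_sum => // i; exact: H.
Qed.

Lemma imul_mem (A B : kset) a b : A a -> B b -> imul A B (a * b).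
Proof.
move=> Aa Bb; exists 1%N, (fun _ => a), (fun _ => b); split => //; split => //.
by rewrite big_ord1.
Qed.

Lemma imul_submod (A B : kset) : submodule A -> submodule (imul A B).
Proof.
move=> sA; split; [|split].
- exists 0%N, (fun _ => 0), (fun _ => 0); split => [[]//|]; split => [[]//|].
  by rewrite big_ord0.
- move=> _ _ [n1 [a1 [b1 [Ha1 [Hb1 ->]]]]] [n2 [a2 [b2 [Ha2 [Hb2 ->]]]]].
  exists (n1 + n2)%N, (fun i => match split i with inl j => a1 j | inr k => a2 k end),
    (fun i => match split i with inl j => b1 j | inr k => b2 k end).
  split; first by move=> i; case: (split i).
  split; first by move=> i; case: (split i).
  rewrite big_split_ord /=; congr (_ + _); apply: eq_bigr => i _.
    by rewrite split_l.
  by rewrite split_r.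
- move=> d _ [n [a [b [Ha [Hb ->]]]]]; exists n, (fun i => emb d * a i), b.
  split; first by move=> i; apply: subM.
  split => //; rewrite mulr_sumr; apply: eq_bigr => i _; by rewrite mulrA.
Qed.

Lemma imulC (A B : kset) : imul A B = imul B A.
Proof.
by apply: setext => y; split; case=> n [a [b [Ha [Hb ->]]]]; exists n, b, a;
  (split => //; split => //); apply: eq_bigr => i _; rewrite mulrC.
Qed.

Lemma imul_frac (A B : kset) : fractional A -> fractional B -> fractional (imul A B).
Proof.
move=> [sA [[y [y0 Ay]] [d [d0 Hd]]]] [sB [[z [z0 Bz]] [e [e0 He]]]].
split; first exact: imul_submod. split.
  by exists (y * z); split; [rewrite mulf_neq0|apply: imul_mem].
exists (d * e); split; first by rewrite mulf_neq0.
move=> _ [n [a [b [Ha [Hb ->]]]]]; rewrite mulr_sumr; apply: sub_sum; first exact: Dset_sub.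
by move=> i; rewrite embM mulrACA; apply: DsetM; [apply: Hd|apply: He].
Qed.

Lemma imul_Dset (A B : kset) : subk A Dset -> subk B Dset -> subk (imul A B) Dset.
Proof.
move=> HA HB; apply: imul_sub; first exact: Dset_sub.
by move=> a b Aa Bb; apply: DsetM; [apply: HA|apply: HB].
Qed.

Lemma imul_mono (A B A1 B1 : kset) : subk A A1 -> subk B B1 -> subk (imul A B) (imul A1 B1).
Proof.
by move=> HA HB _ [n [a [b [Ha [Hb ->]]]]]; exists n, a, b; split; [move=> i; apply: HA|split => // i; apply: HB].
Qed.

Lemma iprod_frac (l : list kset) : (forall I, List.In I l -> fractional I) -> fractional (iprod l).
Proof.
elim: l => [|I l IH] H /=; first exact: fractional_Dset.
apply: imul_frac; first by apply: H; left.
by apply: IH => J HJ; apply: H; right.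
Qed.

Lemma iprod_Dset (l : list kset) : (forall I, List.In I l -> subk I Dset) -> subk (iprod l) Dset.
Proof.
elim: l => [|I l IH] H /=; first by [].
apply: imul_Dset; first by apply: H; left.
by apply: IH => J HJ; apply: H; right.
Qed.

End Frac.
Section Span.
Variable D : idomainType.
Local Notation K := {fraction D}.
Local Notation kset := (kset D).
Local Notation emb := (@emb D).
Local Notation Dset := (@Dset D).

Definition span (s : seq K) : kset := fun y => exists c : 'I_(size s) -> D,
    y = \sum_(i < size s) emb (c i) * s`_i.

Lemma fin_genP (J : kset) : fin_gen J <-> exists s, J = span s.
Proof. by []. Qed.

Lemma span_nil y : span [::] y <-> y = 0.
Proof.
split; first by case=> c ->; rewrite big_ord0.
by move=> ->; exists (fun _ => 0); rewrite big_ord0.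
Qed.

Lemma span_cons a s y : span (a :: s) y <-> exists d z, span s z /\ y = emb d * a + z.
Proof.
split.
  case=> c ->; rewrite big_ord_recl /=; exists (c ord0), (\sum_(i < size s) emb (c (lift ord0 i)) * s`_i).
  by split => //; exists (fun i => c (lift ord0 i)).
case=> d [z [[c' ->] ->]].
exists (fun i : 'I_(size s).+1 => if unlift ord0 i is Some j then c' j else d).
rewrite big_ord_recl /= unlift_none; congr (_ + _); apply: eq_bigr => i _.
by rewrite liftK.
Qed.

Lemma span_sub s : submodule (span s).
Proof.
split; [|split].
- by exists (fun _ => 0); rewrite (eq_bigr (fun _ => 0)) ?big1 // => i _; rewrite emb0 mul0r.
- move=> _ _ [c1 ->] [c2 ->]; exists (fun i => c1 i + c2 i); rewrite -big_split /=.
  by apply: eq_bigr => i _; rewrite embD mulrDl.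
- move=> d _ [c ->]; exists (fun i => d * c i); rewrite mulr_sumr; apply: eq_bigr => i _.
  by rewrite embM mulrA.
Qed.

Lemma span_gen s y : List.In y s -> span s y.
Proof.
elim: s => [|a s IH] //= [->|Hy].
  apply/span_cons; exists 1, 0; split; last by rewrite emb1 mul1r addr0.
  by apply: sub0; apply: span_sub.
apply/span_cons; exists 0, y; split; first exact: IH.
by rewrite emb0 mul0r add0r.
Qed.

Lemma span_le s (C : kset) : submodule C -> (forall y, List.In y s -> C y) -> subk (span s) C.
Proof.
move=> sC; elim: s => [|a s IH] H y.
  by move/span_nil => ->; apply: sub0.
case/span_cons => d [z [Sz ->]]; apply: subD => //.
  by apply: subM => //; apply: H; left.
by apply: IH => // w Hw; apply: H; right.
Qed.

Lemma span_Dset s : (forall y, List.In y s -> Dset y) -> subk (span s) Dset.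
Proof. by move=> H; apply: span_le => //; apply: Dset_sub. Qed.

Lemma span_frac s : (forall y, List.In y s -> Dset y) -> (exists y, y != 0 /\ span s y) ->
  fractional (span s).
Proof.
by move=> H nz; apply: (proj1 (ideal_integral _ _)); [split; [apply: span_sub|apply: span_Dset]|].
Qed.

End Span.
Section Star.
Variable D : idomainType.
Local Notation K := {fraction D}.
Local Notation kset := (kset D).
Local Notation emb := (@emb D).
Local Notation Dset := (@Dset D).
Variable star : kset -> kset.
Hypothesis hstar : star_operation star.
Hypothesis hfin : finite_character star.

Lemma sfrac (I : kset) : fractional I -> fractional (star I). Proof. by case: hstar => H _; apply: H. Qed.
Lemma sprin (x : K) : x != 0 -> star (principal x) = principal x.
Proof. by case: hstar => _ [H _]; apply: H. Qed.
Lemma ssmul (x : K) (I : kset) : x != 0 -> fractional I -> star (smul x I) = smul x (star I).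
Proof. by case: hstar => _ [_ [H _]]; apply: H. Qed.
Lemma sext (I : kset) : fractional I -> subk I (star I).
Proof. by case: hstar => _ [_ [_ [H _]]]; apply: H. Qed.
Lemma smono (I : kset) J : fractional I -> fractional J -> subk I J -> subk (star I) (star J).
Proof. by case: hstar => _ [_ [_ [_ [H _]]]]; apply: H. Qed.
Lemma sidem (I : kset) : fractional I -> star (star I) = star I.
Proof. by case: hstar => _ [_ [_ [_ [_ H]]]]; apply: H. Qed.

Lemma star_Dset : star Dset = Dset.
Proof. by rewrite Dset_principal1 sprin // oner_neq0. Qed.

Lemma star_sub_Dset (I : kset) : fractional I -> subk I Dset -> subk (star I) Dset.
Proof.
move=> fI sD; rewrite -star_Dset; apply: smono => //; exact: fractional_Dset.
Qed.

Lemma int_star_ideal_ideal (I : kset) : int_star_ideal star I -> ideal I.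
Proof. by move=> [[[sI _] _] HD]. Qed.
Lemma int_star_frac (I : kset) : int_star_ideal star I -> fractional I.
Proof. by move=> [[fI _] _]. Qed.

Lemma star_int (I : kset) : fractional I -> subk I Dset -> int_star_ideal star (star I).
Proof.
move=> fI sD; split; last exact: star_sub_Dset.
by split; [apply: sfrac|apply: sidem].
Qed.

Lemma star_in (I : kset) P : int_star_ideal star P -> fractional I -> subk I P -> subk (star I) P.
Proof.
move=> [[fP eP] _] fI sIP; rewrite -eP; exact: smono.
Qed.

Lemma proper1 (I : kset) : ideal I -> Defs.proper I <-> ~ I 1.
Proof.
move=> iI; split; first by move=> pI I1; apply: pI; apply: ideal_one.
by move=> nI eI; apply: nI; rewrite eI; apply: Dset1.
Qed.

Lemma notproper (I : kset) : ~ Defs.proper I -> I = Dset.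
Proof. by move=> H; apply: NNPP. Qed.

Lemma max_ideal (M : kset) : max_star_ideal star M -> ideal M.
Proof. by case=> H _; apply: int_star_ideal_ideal. Qed.
Lemma max_frac (M : kset) : max_star_ideal star M -> fractional M.
Proof. by case=> H _; apply: int_star_frac. Qed.
Lemma max_not1 (M : kset) : max_star_ideal star M -> ~ M 1.
Proof. by move=> hM; apply/proper1; [apply: max_ideal|case: hM => _ []]. Qed.
Lemma max_emb (M : kset) y : max_star_ideal star M -> M y -> exists d, y = emb d.
Proof. by move=> hM My; case: (max_ideal hM) => _ H; apply: H. Qed.

Lemma maxsub (M N : kset) : max_star_ideal star M -> max_star_ideal star N -> subk M N -> N = M.
Proof. by move=> [_ [_ H]] [hN [pN _]] MN; apply: H. Qed.

Lemma gens_in_one (C : kset -> Prop) : (exists A, C A) -> chainP C ->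
  forall s : seq K, (forall g, List.In g s -> bigU C g) ->
  exists A, C A /\ forall g, List.In g s -> A g.
Proof.
move=> [A0 CA0] ch; elim => [|a s IH] H; first by exists A0.
have [A [CA HA]] := IH (fun g Hg => H g (or_intror Hg)).
have [B [CB Ba]] := H a (or_introl erefl).
case: (ch A B CA CB) => AB.
  by exists B; split => // g [<-|Hg] //; apply: AB; apply: HA.
by exists A; split => // g [<-|Hg]; [apply: AB|apply: HA].
Qed.

Lemma union_ideal (C : kset -> Prop) : (forall A, C A -> ideal A) -> (exists A, C A) ->
  chainP C -> ideal (bigU C).
Proof.
move=> HC [A0 CA0] ch; split; [split; [|split]|].
- by exists A0; split => //; apply: sub0; case: (HC _ CA0).
- move=> x y [A [CA Ax]] [B [CB By]]; case: (ch A B CA CB) => AB.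
    by exists B; split => //; apply: subD; [case: (HC _ CB)|apply: AB|].
  by exists A; split => //; apply: subD; [case: (HC _ CA)| |apply: AB].
- by move=> d x [A [CA Ax]]; exists A; split => //; apply: subM => //; case: (HC _ CA).
- by move=> x [A [CA Ax]]; case: (HC _ CA) => _; apply.
Qed.

Lemma union_star (C : kset -> Prop) : (forall A, C A -> int_star_ideal star A) ->
  (exists A, C A) -> chainP C -> fractional (bigU C) -> star (bigU C) = bigU C.
Proof.
move=> HC neC ch fU; apply: setext => y; split; last exact: sext.
rewrite (hfin fU) => -[J [fJ [[s eJ] [JU Jy]]]].
have [A [CA HA]] : exists A, C A /\ forall g, List.In g s -> A g.
  apply: gens_in_one => // g Hg; apply: JU; rewrite eJ; exact: span_gen.
have JA : subk J A by rewrite eJ; apply: span_le => //; case: (int_star_ideal_ideal (HC _ CA)).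
by exists A; split => //; apply: (star_in (HC _ CA) fJ JA).
Qed.

Lemma F1 (I : kset) : int_star_ideal star I -> Defs.proper I -> exists M, max_star_ideal star M /\ subk I M.
Proof.
move=> hI pI.
pose F := fun A => int_star_ideal star A /\ subk I A /\ ~ A 1.
have iI := int_star_ideal_ideal hI.
have [M [[hM [IM M1]] Mmax]] : exists M, F M /\ forall B, F B -> (forall x, M x -> B x) -> B = M.
  apply: (zorn_k (A0 := I)); first by split => //; split => //; apply/proper1.
  move=> C HC neC ch.
  have iU : ideal (bigU C) by apply: union_ideal => // A CA; apply: int_star_ideal_ideal; case: (HC _ CA).
  have IU : subk I (bigU C) by case: neC => A CA x Ix; exists A; split => //; case: (HC _ CA) => _ [H _]; apply: H.
  have fU : fractional (bigU C).
    apply: (proj1 (ideal_integral iU _)).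
    by case: (int_star_frac hI) => _ [[x [x0 Ix]] _]; exists x; split => //; apply: IU.
  split.
    split; last by case: iU.
    by split => //; apply: union_star => // A CA; case: (HC _ CA).
  split => // -[A [CA A1]]; by case: (HC _ CA) => _ [_ H]; apply: H.
exists M; split => //; split => //; split; first by apply/proper1 => //; apply: int_star_ideal_ideal.
move=> J hJ pJ MJ; apply: Mmax => //; split => //; split.
  by move=> x Ix; apply: MJ; apply: IM.
by apply/proper1 => //; apply: int_star_ideal_ideal.
Qed.

Lemma star_D (I : kset) : fractional I -> subk I Dset -> (forall M, max_star_ideal star M -> ~ subk I M) ->
  star I = Dset.
Proof.
move=> fI sD H; apply: notproper => pI.
have [M [hM sM]] := F1 (star_int fI sD) pI.
by apply: (H M hM) => x Ix; apply: sM; apply: sext.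
Qed.

Lemma maxprime (M : kset) : max_star_ideal star M -> forall a b, M (emb (a * b)) -> M (emb a) \/ M (emb b).
Proof.
move=> hM a b Mab; apply: NNPP => /not_or_and [Ma Mb].
have iM := max_ideal hM.
have a0 : a != 0 by apply: contra_notN Ma => /eqP ->; rewrite emb0; apply: sub0; case: iM.
have b0 : b != 0 by apply: contra_notN Mb => /eqP ->; rewrite emb0; apply: sub0; case: iM.
pose X := isum M (principal (emb a)).
have fX : fractional X by apply: isum_frac; [apply: max_frac|apply: principal_frac].
have XD : subk X Dset.
  by move=> _ [m [z [Mm [[d ->] ->]]]]; apply: DsetD; [case: iM => _; apply|apply: DsetM; apply: Dset_emb].
have MX : subk M X by move=> m Mm; exists m, 0; split => //; split; [exists 0; rewrite emb0 mulr0|rewrite addr0].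
have Xa : X (emb a) by exists 0, (emb a); split; [apply: sub0; case: iM|split; [exists 1; rewrite emb1 mulr1|rewrite add0r]].
have eX : star X = Dset.
  apply: notproper => pX; apply: Ma.
  case: hM => _ [_ Hm]; rewrite -(Hm (star X)) //; first by apply: sext.
  - exact: star_int.
  - by move=> x Mx; apply: sext => //; apply: MX.
have fbX : fractional (smul (emb b) X).
  apply: smul_frac => //; first exact: emb_neq0.
  by exists 1; split; [apply: oner_neq0|rewrite emb1 mul1r; apply: Dset_emb].
have sbX : subk (smul (emb b) X) M.
  move=> y [w [[m [z [Mm [[d ez] ew]]]] ->]]; rewrite ew ez mulrDr; apply: subD; first by case: iM.
    by rewrite mulrC; apply: ideal_mulK.
  by rewrite mulrA -embM [b * a]mulrC; apply: ideal_mulK.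
have := star_in (proj1 hM) fbX sbX; rewrite ssmul ?emb_neq0 // eX => H.
by apply: Mb; apply: H; exists 1; split; [apply: Dset1|rewrite mulr1].
Qed.

End Star.
Section Star2.
Variable D : idomainType.
Local Notation K := {fraction D}.
Local Notation kset := (kset D).
Local Notation emb := (@emb D).
Local Notation Dset := (@Dset D).
Variable star : kset -> kset.
Hypothesis hstar : star_operation star.
Hypothesis hfin : finite_character star.

Lemma subk_eq (A B : kset) : subk A B -> subk B A -> A = B.
Proof. by move=> AB BA; apply: setext => x; split; [apply: AB|apply: BA]. Qed.

Lemma not_subk (A B : kset) : ~ subk A B -> exists x, A x /\ ~ B x.
Proof.
move=> H; apply: NNPP => H'; apply: H => x Ax; apply: NNPP => Bx; apply: H'; by exists x.
Qed.

Lemma frac_denom (B : kset) b : fractional B -> B b -> exists m : D, m != 0 /\ Dset (emb m * b).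
Proof. by move=> [_ [_ [e [e0 He]]]] Bb; exists e; split => //; apply: He. Qed.

Lemma star_imul_l (A B : kset) : fractional A -> fractional B ->
  star (imul (star A) B) = star (imul A B).
Proof.
move=> fA fB; have fSA := sfrac hstar fA.
have fAB := imul_frac fA fB; have fSAB := imul_frac fSA fB.
apply: subk_eq; last first.
  by apply: smono => //; apply: imul_mono => //; apply: sext.
rewrite -[X in subk _ X](sidem hstar fAB); apply: smono => //; first exact: sfrac.
apply: imul_sub; first by case: (sfrac hstar fAB).
move=> a b Sa Bb; case: (eqVneq b 0) => [->|b0].
  by rewrite mulr0; apply: sub0; case: (sfrac hstar fAB).
have fbA : fractional (smul b A) by apply: smul_frac => //; apply: (frac_denom fB).
have : subk (star (smul b A)) (star (imul A B)).
  apply: smono => //; move=> _ [z [Az ->]]; rewrite mulrC; exact: imul_mem.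
rewrite ssmul //; apply; exists a; split => //; by rewrite mulrC.
Qed.

Lemma star_imul_r (A B : kset) : fractional A -> fractional B ->
  star (imul A (star B)) = star (imul A B).
Proof. by move=> fA fB; rewrite imulC star_imul_l // imulC. Qed.

Lemma iprod_star (l : list kset) : (forall I, List.In I l -> fractional I) ->
  star (iprod (map star l)) = star (iprod l).
Proof.
elim: l => [|B l IH] H //=.
have fB : fractional B by apply: H; left.
have Hl : forall I, List.In I l -> fractional I by move=> I HI; apply: H; right.
have fl := iprod_frac Hl.
have fl' : fractional (iprod (map star l)).
  apply: iprod_frac => I; rewrite List.in_map_iff => -[J [<- HJ]]; apply: sfrac => //; exact: Hl.
rewrite star_imul_l // -(star_imul_r fB fl') IH // star_imul_r //.
Qed.

Definition primeD (P : kset) := forall a b : D, P (emb (a * b)) -> P (emb a) \/ P (emb b).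

Lemma iprod_prime (P : kset) (l : list kset) : ideal P -> ~ P 1 -> primeD P ->
  (forall I, List.In I l -> subk I Dset) -> subk (iprod l) P ->
  exists I, List.In I l /\ subk I P.
Proof.
move=> iP P1 pP; elim: l => [|I l IH] Hl /= H.
  by exfalso; apply: P1; apply: H; apply: Dset1.
case: (classic (subk I P)) => IP; first by exists I; split => //; left.
case: (classic (subk (iprod l) P)) => lP.
  have [J [HJ JP]] := IH (fun J HJ => Hl J (or_intror HJ)) lP.
  by exists J; split => //; right.
have [a [Ia Pa]] := not_subk IP; have [b [lb Pb]] := not_subk lP.
have [a' ea] : Dset a by apply: (Hl I (or_introl erefl)).
have [b' eb] : Dset b by apply: (iprod_Dset (fun J HJ => Hl J (or_intror HJ))).
have := H _ (imul_mem Ia lb); rewrite ea eb -embM => /pP [].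
  by rewrite -ea.
by rewrite -eb.
Qed.

Lemma max_extend (M : kset) a : max_star_ideal star M -> ~ M (emb a) ->
  star (isum M (principal (emb a))) = Dset.
Proof.
move=> hM Ma; have iM := max_ideal hM.
have a0 : a != 0 by apply: contra_notN Ma => /eqP ->; rewrite emb0; apply: sub0; case: iM.
pose X := isum M (principal (emb a)).
have fX : fractional X by apply: isum_frac; [apply: (max_frac hM)|apply: principal_frac].
have XD : subk X Dset.
  by move=> _ [m [z [Mm [[d ->] ->]]]]; apply: DsetD; [case: iM => _; apply|apply: DsetM; apply: Dset_emb].
have MX : subk M X by move=> m Mm; exists m, 0; split => //; split; [exists 0; rewrite emb0 mulr0|rewrite addr0].
have Xa : X (emb a) by exists 0, (emb a); split; [apply: sub0; case: iM|split; [exists 1; rewrite emb1 mulr1|rewrite add0r]].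
apply: notproper => pX; apply: Ma.
case: hM => _ [_ Hm]; rewrite -(Hm (star X)) //; first by apply: sext.
- exact: star_int.
- by move=> x Mx; apply: sext => //; apply: MX.
Qed.

Lemma ext_ideal (g h : seq K) (M : kset) :
  fractional (span g) -> max_star_ideal star M -> subk (star (span g)) M ->
  (forall y, List.In y h -> M y) ->
  let J := star (span (g ++ h)) in
  [/\ int_star_ideal star J, finite_type star J, Defs.proper J, subk (star (span g)) J &
      subk J M /\ forall y, List.In y h -> J y].
Proof.
move=> fg hM gM hM' J.
have iM := max_ideal hM.
have gensM : forall y, List.In y (g ++ h) -> M y.
  move=> y; rewrite List.in_app_iff => -[Hy|Hy]; last exact: hM'.
  by apply: gM; apply: sext => //; apply: span_gen.
have sgsh : subk (span g) (span (g ++ h)).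
  apply: span_le; first exact: span_sub.
  by move=> y Hy; apply: span_gen; rewrite List.in_app_iff; left.
have fgh : fractional (span (g ++ h)).
  apply: span_frac; first by move=> y Hy; case: iM => _; apply; apply: gensM.
  by case: fg => _ [[y [y0 gy]] _]; exists y; split => //; apply: sgsh.
have ghD : subk (span (g ++ h)) Dset by apply: span_Dset => y Hy; case: iM => _; apply; apply: gensM.
have iJ : int_star_ideal star J by apply: star_int.
have JM : subk J M.
  apply: star_in => //; first by case: hM.
  by apply: span_le; [case: iM|].
split => //.
- by split; [exact: iJ.1|exists (span (g ++ h)); split => //; split => //; exists (g ++ h)].
- apply/proper1; first exact: (int_star_ideal_ideal iJ).
  by move=> J1; apply: (max_not1 hM); apply: JM.
- by apply: smono.
- split => // y Hy; apply: sext => //; apply: span_gen; rewrite List.in_app_iff; by right.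
Qed.

Lemma homog_unique (I P Q : kset) : star_homog star I ->
  max_star_ideal star P -> max_star_ideal star Q -> subk I P -> subk I Q -> P = Q.
Proof.
move=> [hI [[_ [G [fG [[g eG] eI]]]] [pI Hh]]] hP hQ IP IQ.
apply: NNPP => PQ.
have [p0 [Pp Qp]] : exists p, P p /\ ~ Q p.
  by apply: not_subk => PQs; apply: PQ; symmetry; apply: (maxsub hP hQ).
have [p ep] := max_emb hP Pp; subst p0.
pose X := isum Q (principal (emb p)).
have iQ := max_ideal hQ.
have p0 : p != 0 by apply: contra_notN Qp => /eqP ->; rewrite emb0; apply: sub0; case: iQ.
have fX : fractional X by apply: isum_frac; [apply: (max_frac hQ)|apply: principal_frac].
have X1 : star X 1 by rewrite max_extend //; apply: Dset1.
move: X1; rewrite (hfin fX) => -[F [fF [[s eF] [FX F1]]]].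
have [qs [Hqs Hs]] : exists qs : seq K, (forall q, List.In q qs -> Q q) /\
    forall y, List.In y s -> exists q d, List.In q qs /\ y = q + emb p * emb d.
  have : forall y, List.In y s -> X y by move=> y Hy; apply: FX; rewrite eF; apply: span_gen.
  elim: (s) => [|a s' IH] Hs'; first by exists [::].
  have [qs [H1 H2]] := IH (fun y Hy => Hs' y (or_intror Hy)).
  have [q [z [Qq [[d ez] ea]]]] := Hs' a (or_introl erefl).
  exists (q :: qs); split; first by move=> q' [<-|Hq'] //; apply: H1.
  move=> y [<-|Hy]; first by exists q, d; split; [left|rewrite ea ez].
  by have [q' [d' [Hq' ->]]] := H2 y Hy; exists q', d'; split => //; right.
subst G.
have [iJ tJ pJ IJ [JP Jp]] := ext_ideal fG hP (eq_ind _ (fun Z => subk Z P) IP _ eI)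
  (h := [:: emb p]) (fun y Hy => match Hy with or_introl e => eq_ind _ P Pp _ e | or_intror f => match f with end end).
have [iL tL pL IL [LQ Lq]] := ext_ideal fG hQ (eq_ind _ (fun Z => subk Z Q) IQ _ eI) Hqs.
set J := star (span (g ++ [:: emb p])) in iJ tJ pJ IJ JP Jp.
set L := star (span (g ++ qs)) in iL tL pL IL LQ Lq.
apply: (Hh J L iJ tJ pJ _ iL tL pL _); first by rewrite eI.
  by rewrite eI.
have fJL : fractional (isum J L) by apply: isum_frac; [apply: (int_star_frac iJ)|apply: (int_star_frac iL)].
have FJL : subk F (isum J L).
  rewrite eF; apply: span_le; first by case: fJL.
  move=> y Hy; have [q [d [Hq ->]]] := Hs y Hy.
  exists (emb p * emb d), q; split; last by split; [apply: Lq|rewrite addrC].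
  by apply: ideal_mulK; [apply: (int_star_ideal_ideal iJ)|apply: Jp; left].
have SJL1 : star (isum J L) 1 by apply: (smono hstar fF fJL FJL).
apply: ideal_one => //.
apply: (int_star_ideal_ideal (star:=star)); apply: star_int => //.
by move=> _ [a [b [Ja [Lb ->]]]]; apply: DsetD; [case: (int_star_ideal_ideal iJ) => _; apply|case: (int_star_ideal_ideal iL) => _; apply].
Qed.

End Star2.
Section Dir12.
Variable D : idomainType.
Local Notation K := {fraction D}.
Local Notation kset := (kset D).
Local Notation emb := (@emb D).
Local Notation Dset := (@Dset D).
Variable star : kset -> kset.
Hypothesis hstar : star_operation star.
Hypothesis hfin : finite_character star.

Lemma principal_in (P : kset) x : ideal P -> P (emb x) -> subk (principal (emb x)) P.
Proof. by move=> iP Px _ [d ->]; apply: ideal_mulK. Qed.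

Lemma homog_frac (I : kset) : star_homog star I -> fractional I.
Proof. by case=> [[[fI _] _] _]. Qed.
Lemma homog_Dset (I : kset) : star_homog star I -> subk I Dset.
Proof. by case=> [[_ H] _]. Qed.

Lemma homog_max (I : kset) : star_homog star I -> exists M, max_star_ideal star M /\ subk I M.
Proof. by case=> hI [_ [pI _]]; apply: F1. Qed.

Lemma SH_cover (x : D) (l : list kset) : (forall I, List.In I l -> star_homog star I) ->
  principal (emb x) = star (iprod l) ->
  forall P, max_star_ideal star P -> P (emb x) -> exists I, List.In I l /\ subk I P.
Proof.
move=> Hl ex P hP Px.
have fl : fractional (iprod l) by apply: iprod_frac => I HI; apply: homog_frac; apply: Hl.
apply: iprod_prime.
- exact: (max_ideal hP).
- exact: (max_not1 hP).
- exact: (maxprime hstar hP).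
- by move=> I HI; apply: homog_Dset; apply: Hl.
- move=> y Hy; apply: (principal_in (max_ideal hP) Px); rewrite ex; exact: sext.
Qed.

Lemma dir12 : star_SH star ->
  (finite_star_character star /\
   forall P Q, max_star_ideal star P -> max_star_ideal star Q -> P <> Q ->
     forall N, nz_prime N -> ~ subk N (fun x => P x /\ Q x)).
Proof.
move=> SH; split.
  move=> x x0 xnu; have [l [Hl ex]] := SH x x0 xnu.
  have [l' Hl'] : exists l' : list kset, forall I, List.In I l ->
      forall P, max_star_ideal star P -> subk I P -> List.In P l'.
    elim: (l) Hl => [|I l0 IH] Hl0; first by exists nil.
    have [l1 H1] := IH (fun J HJ => Hl0 J (or_intror HJ)).
    have hI := Hl0 I (or_introl erefl).
    have [M [hM IM]] := homog_max hI.
    exists (M :: l1) => J [<-|HJ] P hP JP; last by right; apply: (H1 J HJ).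
    by left; apply: (homog_unique hstar hfin hI hM hP IM JP).
  exists l' => P hP Px; have [I [HI IP]] := SH_cover Hl ex hP Px.
  exact: (Hl' I HI P hP IP).
move=> P Q hP hQ PQ N [[fN ND] [pN prN]] NPQ.
have iN : ideal N by split => //; case: fN.
have [y [y0 Ny]] : exists y, y != 0 /\ N y by case: fN => _ [].
have [x ex] := ND y Ny; subst y.
have x0 : x != 0 by apply: contra_neq y0 => ->; rewrite emb0.
have xnu : x \isn't a GRing.unit.
  apply/negP => xu; apply: pN; apply: ideal_one => //.
  by rewrite -emb1 -(mulrV xu); apply: ideal_mul.
have [l [Hl ex]] := SH x x0 xnu.
have [I [HI IN]] : exists I, List.In I l /\ subk I N.
  apply: iprod_prime => //.
  - by move/(ideal_one iN).
  - by move=> I HI; apply: homog_Dset; apply: Hl.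
  - move=> z Hz; apply: (principal_in iN Ny); rewrite ex; apply: sext => //.
    by apply: iprod_frac => J HJ; apply: homog_frac; apply: Hl.
apply: PQ; apply: (homog_unique hstar hfin (Hl I HI) hP hQ).
  by move=> z Iz; case: (NPQ z (IN z Iz)).
by move=> z Iz; case: (NPQ z (IN z Iz)).
Qed.

End Dir12.
Definition asb (P : Prop) : bool := if excluded_middle_informative P then true else false.
Lemma asbP (P : Prop) : asb P = true <-> P.
Proof. by rewrite /asb; case: excluded_middle_informative. Qed.
Lemma asbF (P : Prop) : asb P = false <-> ~ P.
Proof. by rewrite /asb; case: excluded_middle_informative. Qed.

Lemma filter_len_le (T : Type) (f : T -> bool) (l : list T) :
  (length (List.filter f l) <= length l)%N.
Proof. elim: l => //= a l IH; case: (f a) => //=; exact: leqW. Qed.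

Lemma filter_len (T : Type) (l : list T) (N : T) : List.In N l ->
  (length (List.filter (fun M => ~~ asb (M = N)) l) < length l)%N.
Proof.
elim: l => //= a l IH [->|Hl].
  have -> : asb (N = N) = true by apply/asbP.
  by rewrite /= ltnS filter_len_le.
case: (asb (a = N)) => /=; last by rewrite ltnS; apply: IH.
by rewrite ltnS; apply: leq_trans (filter_len_le _ _) _.
Qed.

Lemma filter_in (T : Type) (l : list T) (N M : T) :
  List.In M (List.filter (fun M => ~~ asb (M = N)) l) <-> List.In M l /\ M <> N.
Proof.
rewrite List.filter_In; split => -[H1 H2]; split => //.
  by move=> e; move: H2; rewrite e; have -> : asb (N = N) = true by apply/asbP.
by apply/negP => /asbP.
Qed.

Section Avoid.
Variable D : idomainType.
Local Notation K := {fraction D}.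
Local Notation kset := (kset D).
Local Notation emb := (@emb D).
Local Notation Dset := (@Dset D).

Definition primeI (N : kset) := ideal N /\ ~ N 1 /\ primeD N.

Lemma prime_mul (N : kset) a b : primeI N -> ~ N (emb a) -> ~ N (emb b) -> ~ N (emb (a * b)).
Proof. by move=> [_ [_ pN]] Na Nb /pN []. Qed.

Lemma avoid (I : kset) : ideal I -> forall ps : list kset,
  (forall N, List.In N ps -> primeI N) ->
  (forall N, List.In N ps -> exists a, I (emb a) /\ ~ N (emb a)) ->
  exists a, I (emb a) /\ forall N, List.In N ps -> ~ N (emb a).
Proof.
move=> iI.
suff H : forall n (ps : list kset), (length ps <= n)%N ->
  (forall N, List.In N ps -> primeI N) ->
  (forall N, List.In N ps -> exists a, I (emb a) /\ ~ N (emb a)) ->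
  exists a, I (emb a) /\ forall N, List.In N ps -> ~ N (emb a).
  by move=> ps; apply: (H (length ps)).
have base : exists a, I (emb a) /\ forall N, List.In N [::] -> ~ N (emb a).
  by exists 0; split => //; rewrite emb0; apply: sub0; case: iI.
elim=> [|n IH] ps; first by case: ps.
case: ps => [|N1 rest] // Hlen Hp Ha.
set ps := N1 :: rest in Hlen Hp Ha *.
apply: NNPP => H0.
have H0' : forall a, I (emb a) -> exists N, List.In N ps /\ N (emb a).
  move=> a Ia; apply: NNPP => Hn; apply: H0; exists a; split => // N HN NA.
  by apply: Hn; exists N.
have key : forall N, List.In N ps -> exists a, I (emb a) /\ N (emb a) /\
    forall N', List.In N' ps -> N' <> N -> ~ N' (emb a).
  move=> N HN.
  have [a [Ia Ha']] : exists a, I (emb a) /\ forall N',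
      List.In N' (List.filter (fun M => ~~ asb (M = N)) ps) -> ~ N' (emb a).
    apply: IH.
    - by rewrite -ltnS; apply: leq_trans Hlen; apply: filter_len.
    - by move=> N' /filter_in [HN' _]; apply: Hp.
    - by move=> N' /filter_in [HN' _]; apply: Ha.
  exists a; split => //; split.
    have [N'' [HN'' N''a]] := H0' a Ia.
    case: (classic (N'' = N)) => [<-//|ne].
    by exfalso; apply: (Ha' N'') => //; apply/filter_in.
  by move=> N' HN' ne; apply: Ha'; apply/filter_in.
have pN1 : primeI N1 by apply: Hp; left.
have [p [Np1 [Hp1 Ip1]]] : exists p, ~ N1 (emb p) /\ (forall N, List.In N ps -> N <> N1 -> N (emb p)) /\
    ((exists N, List.In N ps /\ N <> N1) -> I (emb p)).
  suff : forall L : list kset, (forall N, List.In N L -> List.In N ps) ->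
      exists p, ~ N1 (emb p) /\ (forall N, List.In N L -> N <> N1 -> N (emb p)) /\
      ((exists N, List.In N L /\ N <> N1) -> I (emb p)).
    by move/(_ ps (fun N H => H)).
  elim=> [|N L IHL] HL.
    exists 1; split; first by rewrite emb1; case: pN1 => _ [].
    by split => // -[N [[] _]].
  have [p [Np [HpL IpL]]] := IHL (fun N' H => HL N' (or_intror H)).
  case: (classic (N = N1)) => [eN|neN].
    exists p; split => //; split.
      by move=> N' [<-|HN'] ne //; apply: HpL.
    move=> [N' [[<-|HN'] ne]] //; apply: IpL; by exists N'.
  have [a [Ia [Na Ha']]] := key N (HL N (or_introl erefl)).
  exists (a * p); split.
    apply: prime_mul => //; apply: Ha' => //; first by left.
    by move=> e; apply: neN.
  split.
    move=> N' [<-|HN'] ne; first by apply: ideal_mul => //; case: (Hp N (HL N (or_introl erefl))).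
    by rewrite mulrC; apply: ideal_mul; [case: (Hp N' (HL N' (or_intror HN')))|apply: HpL].
  by move=> _; apply: ideal_mul.
have [a1 [Ia1 [N1a1 Ha1]]] := key N1 (or_introl erefl).
case: (classic (exists N, List.In N ps /\ N <> N1)) => [ex|nex].
  apply: H0; exists (a1 + p); split; first by rewrite embD; apply: subD; case: iI => //; move=> _ _; apply: Ip1.
  move=> N HN; case: (classic (N = N1)) => [->|ne] Nap.
    apply: Np1; have := subB (proj1 (proj1 pN1)) Nap N1a1.
    by rewrite embD addrAC subrr add0r.
  apply: (Ha1 N HN ne); have sN := proj1 (proj1 (Hp N HN)).
  have := subB sN Nap (Hp1 N HN ne); by rewrite embD addrK.
have [a [Ia Na]] := Ha N1 (or_introl erefl).
apply: H0; exists a; split => // N HN; case: (classic (N = N1)) => [->//|ne].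
by exfalso; apply: nex; exists N.
Qed.

End Avoid.
Lemma prod_notin (R : comRingType) (T : Type) (l : list T) (M : T) (a : R) (h : T -> R) :
  ~ List.In M l -> \prod_(M' <- l) (if asb (M' = M) then a else h M') = \prod_(M' <- l) h M'.
Proof.
elim: l => [|b l IH] Hl; first by rewrite !big_nil.
rewrite !big_cons IH; last by move=> H; apply: Hl; right.
have -> // : asb (b = M) = false by apply/asbF => e; apply: Hl; left.
Qed.

Lemma prod_if (R : comRingType) (T : Type) (l : list T) (M : T) (a : R) (h : T -> R) :
  List.NoDup l -> List.In M l ->
  \prod_(M' <- l) (if asb (M' = M) then a else h M') =
  a * \prod_(M' <- l) (if asb (M' = M) then 1 else h M').
Proof.
elim: l => [|b l IH] // /List.NoDup_cons_iff [nb ndl] [eb|Hl].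
  subst b; rewrite !big_cons !prod_notin //.
  have -> : asb (M = M) = true by apply/asbP.
  by rewrite mul1r.
rewrite !big_cons IH //.
have -> : asb (b = M) = false by apply/asbF => e; apply: nb; rewrite e.
by rewrite mulrCA.
Qed.

Section Sarg.
Variable D : idomainType.
Local Notation K := {fraction D}.
Local Notation kset := (kset D).
Local Notation emb := (@emb D).
Local Notation Dset := (@Dset D).
Variable star : kset -> kset.
Hypothesis hstar : star_operation star.
Hypothesis hfin : finite_character star.
Hypothesis Hind : forall P Q, max_star_ideal star P -> max_star_ideal star Q -> P <> Q ->
     forall N, nz_prime N -> ~ subk N (fun x => P x /\ Q x).

Lemma max_primeI (M : kset) : max_star_ideal star M -> primeI M.
Proof.
move=> hM; split; first exact: (max_ideal hM).
split; [exact: (max_not1 hM)|exact: (maxprime hstar hM)].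
Qed.

Lemma principal_ideal (b : D) : ideal (principal (emb b)).
Proof.
split.
  case: (eqVneq b 0) => [->|b0]; last by case: (principal_frac b0).
  split; [exists 0; by rewrite mulr0|split].
    by move=> _ _ [d1 ->] [d2 ->]; exists (d1 + d2); rewrite embD mulrDr.
  by move=> e _ [d ->]; exists (e * d); rewrite embM mulrCA.
by move=> _ [d ->]; rewrite -embM; apply: Dset_emb.
Qed.

Lemma Sarg (x : D) (ms : list kset) : x != 0 -> List.NoDup ms ->
  (forall M, List.In M ms -> max_star_ideal star M) -> ms <> nil ->
  exists c : kset -> D, (forall M N, List.In M ms -> List.In N ms -> N <> M -> ~ N (emb (c M))) /\
    exists d, \prod_(M <- ms) c M = x * d.
Proof.
move=> x0 ndms Hms nems.
pose good := fun c : kset -> D => forall M N, List.In M ms -> List.In N ms -> N <> M -> ~ N (emb (c M)).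
pose S := fun s : D => exists c, good c /\ s = \prod_(M <- ms) c M.
apply: NNPP => Hc.
have Hc' : forall s, S s -> forall d, s <> x * d.
  by move=> s [c [gc ->]] d e; apply: Hc; exists c; split => //; exists d.
have S1 : S 1.
  exists (fun _ => 1); split; last by rewrite big1.
  by move=> M N _ HN _; rewrite emb1; apply: (max_not1 (Hms N HN)).
have SM : forall s1 s2, S s1 -> S s2 -> S (s1 * s2).
  move=> _ _ [c1 [g1 ->]] [c2 [g2 ->]]; exists (fun M => c1 M * c2 M); split; last by rewrite big_split.
  move=> M N HM HN ne; apply: prime_mul; first exact: (max_primeI (Hms N HN)).
    exact: g1.
  exact: g2.
pose F := fun A : kset => ideal A /\ A (emb x) /\ forall s, S s -> ~ A (emb s).
have [P [[iP [Px PS]] Pmax]] : exists P, F P /\ forall B, F B -> (forall y, P y -> B y) -> B = P.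
  apply: (zorn_k (A0 := principal (emb x))).
    split; first exact: principal_ideal.
    split; first by exists 1; rewrite emb1 mulr1.
    by move=> s Ss [d ed]; apply: (Hc' s Ss d); apply: emb_inj; rewrite ed embM.
  move=> C HC [A0 CA0] ch; split; first by apply: union_ideal => //; [move=> A /HC []|exists A0].
  split; first by exists A0; split => //; case: (HC _ CA0) => _ [].
  by move=> s Ss [A [CA As]]; case: (HC _ CA) => _ [_ H]; apply: (H s Ss).
have P1 : ~ P (emb 1) by apply: PS.
have pP : primeD P.
  move=> a b Pab; apply: NNPP => /not_or_and [Pa Pb].
  have ext : forall e, ~ P (emb e) -> exists s p d, S s /\ P p /\ emb s = p + emb e * emb d.
    move=> e Pe; pose B := isum P (principal (emb e)).
    have iB : ideal B by apply: isum_ideal => //; apply: principal_ideal.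
    have PB : forall y, P y -> B y.
      by move=> y Py; exists y, 0; split => //; split; [exists 0; rewrite emb0 mulr0|rewrite addr0].
    have nFB : ~ F B.
      move=> FB; apply: Pe; rewrite -(Pmax B FB PB).
      by exists 0, (emb e); split; [apply: sub0; case: iP|split; [exists 1; rewrite emb1 mulr1|rewrite add0r]].
    apply: NNPP => Hn; apply: nFB; split => //; split; first by apply: PB.
    move=> s Ss [p [z [Pp [[d ez] es]]]]; apply: Hn; exists s, p, d; split => //; split => //.
    by rewrite es ez.
  have [s1 [p1 [d1 [S1' [Pp1 e1]]]]] := ext a Pa.
  have [s2 [p2 [d2 [S2' [Pp2 e2]]]]] := ext b Pb.
  apply: (PS _ (SM _ _ S1' S2')).
  have p2D : Dset p2 by case: iP => _; apply.
  rewrite embM {1}e2 mulrDr; apply: (subD (proj1 iP)).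
    by rewrite mulrC; apply: ideal_mulD => //; apply: Dset_emb.
  rewrite e1 mulrDl; apply: (subD (proj1 iP)).
    by apply: ideal_mulD => //; apply: DsetM; apply: Dset_emb.
  have -> : emb a * emb d1 * (emb b * emb d2) = emb (a * b) * emb (d1 * d2).
    by rewrite !embM mulrACA.
  exact: ideal_mulK.
have nzP : nz_prime P.
  split; first by apply: ideal_integral => //; exists (emb x); split => //; apply: emb_neq0.
  split => //; apply/proper1 => //; by rewrite -emb1.
have key : forall M, List.In M ms -> exists N, List.In N ms /\ N <> M /\ subk P N.
  move=> M HM; apply: NNPP => Hn.
  have [a [Pa Ha]] : exists a, P (emb a) /\ forall N,
      List.In N (List.filter (fun M' => ~~ asb (M' = M)) ms) -> ~ N (emb a).
    apply: avoid => //.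
      by move=> N /filter_in [HN _]; apply: max_primeI; apply: Hms.
    move=> N /filter_in [HN ne]; have [y [Py Ny]] : exists y, P y /\ ~ N y.
      by apply: not_subk => PN; apply: Hn; exists N.
    by have [a ea] := proj2 iP y Py; exists a; rewrite -ea.
  apply: (PS a) => //; exists (fun M' => if asb (M' = M) then a else 1); split.
    move=> M' N HM' HN ne; case: (classic (M' = M)) => [eM|nM].
      have -> : asb (M' = M) = true by apply/asbP.
      by apply: Ha; apply/filter_in; split => //; rewrite -eM.
    have -> : asb (M' = M) = false by apply/asbF.
    by rewrite emb1; apply: (max_not1 (Hms N HN)).
  by rewrite prod_if // (eq_bigr (fun _ => 1)) ?big1 ?mulr1 // => i _; case: asb.
have [M0 HM0] : exists M0, List.In M0 ms by case: (ms) nems => [//|M0 ?] _; exists M0; left.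
have [N1 [HN1 [_ PN1]]] := key M0 HM0.
have [N2 [HN2 [ne PN2]]] := key N1 HN1.
apply: (Hind (Hms N1 HN1) (Hms N2 HN2) (fun e => ne (esym e)) nzP).
by move=> y Py; split; [apply: PN1|apply: PN2].
Qed.

End Sarg.
Lemma prod_const_seq (R : comRingType) (T : Type) (l : list T) (x : R) :
  \prod_(i <- l) x = x ^+ size l.
Proof. by elim: l => [|a l IH]; rewrite ?big_nil ?expr0 // big_cons IH exprS. Qed.

Section Dir21.
Variable D : idomainType.
Local Notation K := {fraction D}.
Local Notation kset := (kset D).
Local Notation emb := (@emb D).
Local Notation Dset := (@Dset D).
Variable star : kset -> kset.
Hypothesis hstar : star_operation star.
Hypothesis hfin : finite_character star.
Hypothesis Hind : forall P Q, max_star_ideal star P -> max_star_ideal star Q -> P <> Q ->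
     forall N, nz_prime N -> ~ subk N (fun x => P x /\ Q x).

Lemma pow_prime (P : kset) (x : D) k : primeD P -> ~ P (emb 1) -> P (emb (x ^+ k)) -> P (emb x).
Proof.
move=> pP P1; elim: k => [|k IH]; first by rewrite expr0.
by rewrite exprS => /pP [].
Qed.

Lemma prod_notP (P : kset) (T : Type) (L : list T) (h : T -> D) : primeI P ->
  (forall M, List.In M L -> ~ P (emb (h M))) -> ~ P (emb (\prod_(M <- L) h M)).
Proof.
move=> pP; elim: L => [|a L IH] H; first by rewrite big_nil emb1; case: pP => _ [].
rewrite big_cons; apply: prime_mul => //; first by apply: H; left.
by apply: IH => M HM; apply: H; right.
Qed.

Definition Tset (x p : D) : kset := fun y => exists d e : D, y = emb (x * d + p * e).

Lemma Tset_sub x p : submodule (Tset x p).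
Proof.
split; [|split].
- by exists 0, 0; rewrite !mulr0 addr0 emb0.
- move=> _ _ [d1 [e1 ->]] [d2 [e2 ->]]; exists (d1 + d2), (e1 + e2); rewrite -embD; congr emb; ring.
- move=> f _ [d [e ->]]; exists (f * d), (f * e); rewrite -embM; congr emb; ring.
Qed.

Lemma dir21 : finite_star_character star -> star_SH star.
Proof.
move=> fsc x x0 xnu.
have [l Hl] := fsc x x0 xnu.
pose kdec := fun A B : kset => excluded_middle_informative (A = B).
pose ms := List.nodup kdec (List.filter (fun M => asb (max_star_ideal star M /\ M (emb x))) l).
have ndms : List.NoDup ms by apply: List.NoDup_nodup.
have Hms : forall M, List.In M ms <-> max_star_ideal star M /\ M (emb x).
  move=> M; rewrite List.nodup_In List.filter_In asbP; split; first by case.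
  by move=> [hM Mx]; split => //; apply: Hl.
have hms : forall M, List.In M ms -> max_star_ideal star M by move=> M /Hms [].
have xms : forall M, List.In M ms -> M (emb x) by move=> M /Hms [].
have ex0 : emb x != 0 by apply: emb_neq0.
have fpx : fractional (principal (emb x)) by apply: principal_frac.
have nems : ms <> nil.
  have ipx : int_star_ideal star (principal (emb x)).
    split; first by split => //; apply: sprin.
    by case: (principal_ideal x).
  have ppx : Defs.proper (principal (emb x)).
    move=> e; apply/negP: xnu; rewrite negbK; apply/unitrPr.
    have : principal (emb x) 1 by rewrite e; apply: Dset1.
    by case=> d ed; exists d; apply: emb_inj; rewrite embM emb1.
  have [M [hM sM]] := F1 hstar hfin ipx ppx.
  have : List.In M ms by apply/Hms; split => //; apply: sM; exists 1; rewrite emb1 mulr1.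
  by case: (ms).
have [c [gc [d ec]]] := Sarg hstar Hind x0 ndms hms nems.
have Hm : forall M, exists m : D, List.In M ms -> M (emb m) /\
    forall N, List.In N ms -> N <> M -> ~ N (emb m).
  move=> M; case: (classic (List.In M ms)) => HM; last by exists 0.
  have [a [Ma Ha]] : exists a, M (emb a) /\ forall N,
      List.In N (List.filter (fun M' => ~~ asb (M' = M)) ms) -> ~ N (emb a).
    apply: avoid; first exact: (max_ideal (hms M HM)).
      by move=> N /filter_in [HN _]; apply: (max_primeI hstar); apply: hms.
    move=> N /filter_in [HN ne]; have [y [My Ny]] : exists y, M y /\ ~ N y.
      by apply: not_subk => MN; apply: ne; apply: (maxsub (hms M HM) (hms N HN)).
    by have [a ea] := max_emb (hms M HM) My; exists a; rewrite -ea.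
  by exists a => _; split => // N HN ne; apply: Ha; apply/filter_in.
pose mf := fun M => proj1_sig (constructive_indefinite_description _ (Hm M)).
have Hmf : forall M, List.In M ms -> M (emb (mf M)) /\
    forall N, List.In N ms -> N <> M -> ~ N (emb (mf M)).
  by move=> M; rewrite /mf; case: constructive_indefinite_description.
pose c' := fun M => c M * mf M.
have c'M : forall M, List.In M ms -> M (emb (c' M)).
  by move=> M HM; rewrite /c' mulrC; apply: ideal_mul; [apply: (max_ideal (hms M HM))|case: (Hmf M HM)].
have c'N : forall M N, List.In M ms -> List.In N ms -> N <> M -> ~ N (emb (c' M)).
  move=> M N HM HN ne; apply: prime_mul; first exact: (max_primeI hstar (hms N HN)).
    exact: gc.
  by case: (Hmf M HM) => _; apply.
have ec' : \prod_(M <- ms) c' M = x * (d * \prod_(M <- ms) mf M).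
  by rewrite /c' big_split /= ec mulrA.
pose B := fun M => span [:: emb x; emb (c' M)].
have BD : forall M, subk (B M) Dset.
  by move=> M; apply: span_Dset => y [<-|[<-|[]]]; apply: Dset_emb.
have fB : forall M, fractional (B M).
  move=> M; apply: span_frac; first by move=> y [<-|[<-|[]]]; apply: Dset_emb.
  by exists (emb x); split => //; apply: span_gen; left.
pose A := fun M => star (B M).
have iA : forall M, int_star_ideal star (A M) by move=> M; apply: star_int.
have AM : forall M, List.In M ms -> subk (A M) M.
  move=> M HM; apply: (star_in hstar (proj1 (hms M HM)) (fB M)).
  apply: span_le; first by case: (max_ideal (hms M HM)).
  by move=> y [<-|[<-|[]]]; [apply: xms|apply: c'M].
have Aunique : forall M J, List.In M ms -> int_star_ideal star J -> Defs.proper J -> subk (A M) J -> subk J M.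
  move=> M J HM iJ pJ AJ.
  have [P [hP JP]] := F1 hstar hfin iJ pJ.
  have HP : List.In P ms.
    by apply/Hms; split => //; apply: JP; apply: AJ; apply: (sext hstar (fB M)); apply: span_gen; left.
  have eP : P = M.
    apply: NNPP => ne; apply: (c'N M P HM HP ne); apply: JP; apply: AJ.
    by apply: (sext hstar (fB M)); apply: span_gen; right; left.
  by rewrite -eP.
have hA : forall M, List.In M ms -> star_homog star (A M).
  move=> M HM; split => //; split.
    by split; [exact: (iA M).1|exists (B M); split => //; split => //; exists [:: emb x; emb (c' M)]].
  split.
    apply/proper1; first exact: (int_star_ideal_ideal (iA M)).
    by move=> A1; apply: (max_not1 (hms M HM)); apply: AM.
  move=> J L iJ _ pJ AJ iL _ pL AL e.
  have JM := Aunique M J HM iJ pJ AJ; have LM := Aunique M L HM iL pL AL.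
  have fJL : fractional (isum J L) by apply: isum_frac; [exact: (int_star_frac iJ)|exact: (int_star_frac iL)].
  have : subk (star (isum J L)) M.
    apply: (star_in hstar (proj1 (hms M HM)) fJL).
    move=> _ [a [b [Ja [Lb ->]]]]; apply: subD; first by case: (max_ideal (hms M HM)).
      exact: JM.
    exact: LM.
  by rewrite e => H; apply: (max_not1 (hms M HM)); apply: H; apply: Dset1.
exists (List.map A ms); split.
  by move=> I /List.in_map_iff [M [<- HM]]; apply: hA.
have fBs : forall I, List.In I (List.map B ms) -> fractional I.
  by move=> I /List.in_map_iff [M [<- HM]].
have -> : List.map A ms = List.map star (List.map B ms) by rewrite List.map_map.
rewrite iprod_star //.
pose Pi := iprod (List.map B ms).
have fPi : fractional Pi by apply: iprod_frac.
have PiD : subk Pi Dset by apply: iprod_Dset => I /List.in_map_iff [M [<- HM]].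
have PiT : forall L : list kset, subk (iprod (List.map B L)) (Tset x (\prod_(M <- L) c' M)).
  elim=> [|M L IH] /=.
    by move=> _ [e ->]; exists 0, e; rewrite big_nil mulr0 add0r mul1r.
  apply: imul_sub; first exact: Tset_sub.
  move=> a b Ba /IH [d1 [e1 ->]].
  move: Ba => /span_cons [f1 [z [/span_cons [f2 [z' [/span_nil -> ->]]] ->]]].
  rewrite big_cons; exists (f1 * (x * d1 + \prod_(j <- L) c' j * e1) + f2 * c' M * d1), (f2 * e1).
  rewrite addr0 -!embM -embD -embM; congr emb; ring.
have Pix : subk Pi (principal (emb x)).
  move=> y /(PiT ms) [d1 [e1 ->]]; rewrite ec'; exists (d1 + d * \prod_(M <- ms) mf M * e1).
  rewrite -embM; congr emb; ring.
apply: subk_eq.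
  apply: principal_in.
    by apply: (int_star_ideal_ideal (star:=star)); apply: star_int.
  pose Q := smul (emb x)^-1 Pi.
  have fQ : fractional Q.
    apply: smul_frac => //; first by rewrite invr_eq0.
    by exists x; split => //; rewrite mulfV //; apply: Dset1.
  have Qemb : forall z, Pi (emb (x * z)) -> Q (emb z).
    by move=> z Pz; exists (emb (x * z)); split => //; rewrite embM mulKf.
  have QD : subk Q Dset.
    by move=> _ [w [Pw ->]]; have [e ->] := Pix w Pw; rewrite mulKf //; apply: Dset_emb.
  have prodmem : forall (L : list kset) (f : kset -> D), (forall M, List.In M L -> B M (emb (f M))) ->
      iprod (List.map B L) (emb (\prod_(M <- L) f M)).
    elim=> [|M L IH] f Hf /=; first by rewrite big_nil; apply: Dset_emb.
    rewrite big_cons embM; apply: imul_mem; first by apply: Hf; left.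
    by apply: IH => M' HM'; apply: Hf; right.
  have sQ : star Q = Dset.
    apply: (star_D hstar hfin fQ QD) => P hP QP.
    have pP := max_primeI hstar hP.
    have [n en] : exists n, size ms = n.+1 by case: (ms) nems => [//|? s] _; exists (size s).
    have Px : P (emb x).
      apply: (pow_prime (k := n)); [exact: pP.2.2|by rewrite emb1; exact: pP.2.1|].
      apply: QP; apply: Qemb; rewrite -exprS -en -prod_const_seq.
      by apply: prodmem => M HM; apply: span_gen; left.
    have HP : List.In P ms by apply/Hms.
    apply: (prod_notP (h := fun M => if asb (M = P) then 1 else c' M) pP (L := ms)).
      move=> M HM; case: (classic (M = P)) => [eM|nM].
        have -> : asb (M = P) = true by apply/asbP.
        by rewrite emb1; exact: pP.2.1.
      have -> : asb (M = P) = false by apply/asbF.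
      exact: (c'N M P HM HP (fun e => nM (esym e))).
    apply: QP; apply: Qemb; rewrite -prod_if //.
    apply: prodmem => M HM; case: (asb (M = P)); apply: span_gen; [left|right; left] => //.
  have : star (smul (emb x) Q) (emb x).
    by rewrite ssmul // sQ; exists 1; split; [apply: Dset1|rewrite mulr1].
  have -> // : smul (emb x) Q = Pi.
  apply: setext => y; split.
    by case=> _ [[w [Pw ->]] ->]; rewrite mulVKf.
  by move=> Py; exists ((emb x)^-1 * y); split; [exists y|rewrite mulVKf].
rewrite -(sprin hstar ex0); apply: smono => //.
Qed.

End Dir21.

Theorem theoremM (D : idomainType) (star : kset D -> kset D)
  (hstar : star_operation star) (hfin : finite_character star) :
  star_SH star <->
  (finite_star_character star /\
   forall P Q, max_star_ideal star P -> max_star_ideal star Q -> P <> Q ->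
     forall N, nz_prime N -> ~ subk N (fun x => P x /\ Q x)).
Proof.
split; first exact: (dir12 hstar hfin).
by case=> fsc Hind; apply: (dir21 hstar hfin Hind fsc).
Qed.
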